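(* Let $G=(V,E)$ be a tree, let $S_0=\{r\}$, let $u\in V\setminus\{r\}$, and let $\tau$ be the first round after which $u$ is informed. Let $p_{r,u}$ be the set of nodes on the unique path from $r$ to $u$ (including $r$ and $u$) and $D_{p_{r,u}}=\sum_{w\in p_{r,u}} d_w$, where $d_w$ is the degree of $w$. Then: (1) for \textsc{Pull}, $\mathbb{E}[\tau]=\Theta(D_{p_{r,u}}-d_r)$; (2) for every type of \textsc{RPull} (adversarial or random), $\mathbb{E}[\tau]=\Omega(D_{p_{r,u}}-d_r)$; (3) for adversarial \textsc{RPull}, $\mathbb{E}[\tau]=O(D_{p_{r,u}})$.
   Context: Rumor spreading proceeds in synchronous rounds. \textsc{Pull}: in each round, every uninformed node contacts a uniformly random neighbor and learns the rumor if that neighbor is informed (an informed node may serve arbitrarily many requests). \textsc{RPull}: in each round, every uninformed node sends a request to a uniformly random neighbor; every informed node $v$ receiving a nonempty set $R_v$ of requests selects exactly one node of $R_v$, which learns the rumor. In adversarial \textsc{RPull} the selected node is chosen by an adaptive adversary; in random \textsc{RPull} it is chosen uniformly at random, independently. *)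

(* Defs.v *)
From HB Require Import structures.
From mathcomp Require Import all_boot all_order all_algebra.
From mathcomp Require Import all_classical all_reals all_analysis.
Set Implicit Arguments. Unset Strict Implicit. Unset Printing Implicit Defensive.
Import Order.TTheory GRing.Theory Num.Theory.
Local Open Scope ring_scope.

Definition simple_graph (T : finType) (e : rel T) : Prop :=
  symmetric e /\ irreflexive e.

Definition acyclic (T : finType) (e : rel T) : Prop :=
  forall s : seq T, uniq s -> (3 <= size s)%N -> ~~ cycle e s.

Definition connected (T : finType) (e : rel T) : Prop :=
  forall x y : T, connect e x y.

Definition is_tree (T : finType) (e : rel T) : Prop :=
  [/\ simple_graph e, connected e & acyclic e].

Definition simple_path (T : finType) (e : rel T) (r : T) (s : seq T) (u : T) : Prop :=
  [/\ path e r s, last r s = u & uniq (r :: s)].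

Definition deg (T : finType) (e : rel T) (w : T) : nat := #|[set x | e w x]|.

Definition Dpath (T : finType) (e : rel T) (r : T) (s : seq T) : nat :=
  (\sum_(w <- r :: s) deg e w)%N.

(* Randomness of one round: every node v picks c v.  Uninformed nodes
   (v \notin S) pick a uniformly random neighbour; informed nodes make no
   choice (encoded as c v = v, with probability 1). *)
Definition wt (R : realType) (T : finType) (e : rel T) (S : {set T})
  (c : {ffun T -> T}) : R :=
  \prod_(v : T) (if v \in S then (c v == v)%:R
                 else (e v (c v))%:R / (deg e v)%:R).

Definition pull_step (T : finType) (S : {set T}) (c : {ffun T -> T}) : {set T} :=
  S :|: [set v | (v \notin S) && (c v \in S)].

Definition req (T : finType) (S : {set T}) (c : {ffun T -> T}) (w : T) : {set T} :=
  [set v | (v \notin S) && (c v == w)].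

Definition rpull_step (T : finType) (S : {set T}) (c s : {ffun T -> T}) : {set T} :=
  S :|: [set s w | w in [set w in S | (0 < #|req S c w|)%N]].

Definition selwt (R : realType) (T : finType) (S : {set T}) (c s : {ffun T -> T}) : R :=
  \prod_(w : T) (if (w \in S) && ((0 < #|req S c w|)%N)
                 then (s w \in req S c w)%:R / #|req S c w|%:R
                 else (s w == w)%:R).

(* Adversarial RPULL: an adaptive (deterministic) adversary sees the whole
   history of random choices (which determines the whole past of the
   process, since its own past selections are functions of it) including the
   current round's requests, and outputs a selection; an invalid selection
   at w is replaced by some element of R_w, so that every adversary is valid
   and every valid adversary arises. *)
Definition adversary (T : finType) := seq {ffun T -> T} -> {ffun T -> T}.

Definition adv_sel (T : finType) (S : {set T}) (c s : {ffun T -> T}) : {ffun T -> T} :=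
  [ffun w => if s w \in req S c w then s w else odflt w [pick v in req S c w]].

(* P(u is not informed after t more rounds | current informed set S) *)
Fixpoint pull_surv (R : realType) (T : finType) (e : rel T) (u : T)
  (t : nat) (S : {set T}) : R :=
  match t with
  | 0 => (u \notin S)%:R
  | t'.+1 => \sum_(c : {ffun T -> T}) wt R e S c * pull_surv R e u t' (pull_step S c)
  end.

Fixpoint rrpull_surv (R : realType) (T : finType) (e : rel T) (u : T)
  (t : nat) (S : {set T}) : R :=
  match t with
  | 0 => (u \notin S)%:R
  | t'.+1 => \sum_(c : {ffun T -> T}) \sum_(s : {ffun T -> T})
               wt R e S c * selwt R S c s * rrpull_surv R e u t' (rpull_step S c s)
  end.

Fixpoint arpull_surv (R : realType) (T : finType) (e : rel T) (u : T)
  (A : adversary T) (t : nat) (h : seq {ffun T -> T}) (S : {set T}) : R :=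
  match t with
  | 0 => (u \notin S)%:R
  | t'.+1 => \sum_(c : {ffun T -> T})
      wt R e S c * arpull_surv R e u A t' (rcons h c)
                     (rpull_step S c (adv_sel S c (A (rcons h c))))
  end.

(* E[tau] = sum_{t >= 0} P(tau > t) = sum_t P(u not informed after round t),
   started from S_0 = {r}. *)
Definition ET (R : realType) (f : nat -> R) : \bar R :=
  (\sum_(0 <= t <oo) (f t)%:E)%E.

Definition E_pull (R : realType) (T : finType) (e : rel T) (r u : T) : \bar R :=
  ET (fun t => pull_surv R e u t [set r]).
Definition E_rrpull (R : realType) (T : finType) (e : rel T) (r u : T) : \bar R :=
  ET (fun t => rrpull_surv R e u t [set r]).
Definition E_arpull (R : realType) (T : finType) (e : rel T) (r u : T)
  (A : adversary T) : \bar R :=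
  ET (fun t => arpull_surv R e u A t [::] [set r]).

(* Main.v *)
Require Import Defs.
From HB Require Import structures.
From mathcomp Require Import all_boot all_order all_algebra.
From mathcomp Require Import all_classical all_reals all_analysis.
From mathcomp Require Import zify ring.
Import Order.TTheory GRing.Theory Num.Theory.

Module G1.
Import Order.TTheory GRing.Theory Num.Theory.
Set Implicit Arguments. Unset Strict Implicit.
Local Open Scope ring_scope.

Lemma ET_ge (R : realType) (f : nat -> R) N :
  (forall t, 0 <= f t) -> ((\sum_(t < N) f t)%:E <= ET f)%E.
Proof.
move=> f0; rewrite /ET.
have := @nneseries_lim_ge R (fun t => (f t)%:E) xpredT 0 N.
rewrite -sumEFin big_mkord; apply => n _ _; rewrite lee_fin; exact: f0.
Qed.

Lemma ET_le (R : realType) (f : nat -> R) M :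
  (forall t, 0 <= f t) -> (forall N, \sum_(t < N) f t <= M) -> (ET f <= M%:E)%E.
Proof.
move=> f0 fM; rewrite /ET.
apply: (lime_le (is_cvg_nneseries _)) => [n _ _|]; first by rewrite lee_fin.
apply: nearW => k; rewrite sumEFin lee_fin big_mkord; exact: fM.
Qed.

Section Gen.
Variables (R : realType) (X : Type) (I : finType) (mu : X -> I -> R)
  (nx : X -> I -> X) (bad : X -> bool) (Inv : X -> Prop).

Fixpoint gsurv (t : nat) (x : X) : R :=
  match t with 0 => (bad x)%:R | t'.+1 => \sum_i mu x i * gsurv t' (nx x i) end.

Hypothesis mu_ge0 : forall x i, 0 <= mu x i.
Hypothesis mu_sum1 : forall x, Inv x -> \sum_i mu x i = 1.
Hypothesis inv_step : forall x i, Inv x -> mu x i != 0 -> Inv (nx x i).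
Hypothesis bad_mono : forall x i, Inv x -> mu x i != 0 -> bad (nx x i) -> bad x.

Lemma gsurv_ge0 t x : 0 <= gsurv t x.
Proof.
elim: t x => [|t IH] x /=; first by rewrite ler0n.
by apply: sumr_ge0 => i _; rewrite mulr_ge0.
Qed.

Lemma gsurv_good t x : Inv x -> ~~ bad x -> gsurv t x = 0.
Proof.
elim: t x => [|t IH] x Ix bx /=; first by rewrite (negbTE bx).
apply: big1 => i _; have [->|nz] := eqVneq (mu x i) 0; first by rewrite mul0r.
rewrite IH ?mulr0 //; first exact: inv_step.
by apply/negP => /(bad_mono Ix nz); apply/negP.
Qed.

Lemma gsurv_le1 t x : Inv x -> gsurv t x <= 1.
Proof.
elim: t x => [|t IH] x Ix /=; first by case: (bad x); rewrite ?ler0n ?lexx.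
rewrite -(mu_sum1 Ix); apply: ler_sum => i _.
have [->|nz] := eqVneq (mu x i) 0; first by rewrite mul0r.
by rewrite ler_piMr // IH //; exact: inv_step.
Qed.

Lemma gsurv_dec t x : Inv x -> gsurv t.+1 x <= gsurv t x.
Proof.
elim: t x => [|t IH] x Ix.
  case bx: (bad x).
    rewrite /=; rewrite bx; have := gsurv_le1 1 Ix; by [].
  by rewrite (gsurv_good 1 Ix) ?bx //= bx.
rewrite [gsurv t.+2 x]/= [gsurv t.+1 x]/=; apply: ler_sum => i _.
have [->|nz] := eqVneq (mu x i) 0; first by rewrite !mul0r.
by rewrite ler_wpM2l // IH //; exact: inv_step.
Qed.

Definition gF N x := \sum_(t < N) gsurv t x.

Lemma gF_S N x : gF N.+1 x = (bad x)%:R + \sum_i mu x i * gF N (nx x i).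
Proof.
rewrite /gF big_ord_recl /=; congr (_ + _).
rewrite exchange_big /=; apply: eq_bigr => i _; rewrite mulr_sumr.
by apply: eq_bigr => t _; rewrite add0n.
Qed.

Lemma gF_ub (Phi : X -> R) :
  (forall x, Inv x -> 0 <= Phi x) ->
  (forall x, Inv x -> bad x -> 1 + \sum_i mu x i * Phi (nx x i) <= Phi x) ->
  forall N x, Inv x -> gF N x <= Phi x.
Proof.
move=> P0 Pd; elim=> [|N IH] x Ix; first by rewrite /gF big_ord0 P0.
case bx: (bad x); last first.
  rewrite /gF big1 ?P0 // => t _; rewrite gsurv_good ?bx //.
rewrite gF_S bx; apply: le_trans (Pd _ Ix bx); rewrite lerD2l.
apply: ler_sum => i _; have [->|nz] := eqVneq (mu x i) 0; first by rewrite !mul0r.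
by rewrite ler_wpM2l // IH //; exact: inv_step.
Qed.

Lemma gF_lb (Psi : X -> R) (C : nat) :
  (forall x, Inv x -> Psi x <= C%:R * (bad x)%:R) ->
  (forall x, Inv x -> bad x -> Psi x <= 1 + \sum_i mu x i * Psi (nx x i)) ->
  forall x, Inv x -> Psi x <= 2 * gF C.+1 x.
Proof.
move=> PC Pd.
have key : forall N x, Inv x -> Psi x <= gF N x + C%:R * gsurv N x.
  elim=> [|N IH] x Ix; first by rewrite /gF big_ord0 add0r /= PC.
  case bx: (bad x); last first.
    apply: le_trans (PC _ Ix) _; rewrite bx mulr0.
    by rewrite addr_ge0 ?mulr_ge0 ?ler0n ?gsurv_ge0 // /gF sumr_ge0 // => t _; rewrite gsurv_ge0.
  rewrite gF_S /= bx mulr_sumr -addrA -big_split /=.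
  apply: le_trans (Pd _ Ix bx) _; rewrite lerD2l; apply: ler_sum => i _.
  rewrite (mulrCA C%:R) -mulrDr; have [->|nz] := eqVneq (mu x i) 0; first by rewrite !mul0r.
  by rewrite ler_wpM2l // IH //; exact: inv_step.
move=> x Ix; apply: le_trans (key C.+1 x Ix) _.
rewrite mulr2n mulrDl mul1r lerD2l.
have h1 : C%:R * gsurv C.+1 x <= C.+1%:R * gsurv C.+1 x.
  by rewrite ler_wpM2r ?gsurv_ge0 // ler_nat.
apply: le_trans h1 _.
have -> : C.+1%:R * gsurv C.+1 x = \sum_(t < C.+1) gsurv C.+1 x.
  by rewrite sumr_const card_ord mulr_natl.
rewrite /gF; apply: ler_sum => t _.
have : forall m, (m <= C.+1)%N -> forall t, (t <= m)%N -> gsurv m x <= gsurv t x.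
  elim=> [|m IHm] Hm t0 Ht0; first by rewrite leqn0 in Ht0; rewrite (eqP Ht0).
  rewrite leq_eqVlt in Ht0; case/orP: Ht0 => [/eqP->//|Ht0].
  apply: le_trans (gsurv_dec m Ix) (IHm (ltnW Hm) t0 Ht0).
by apply => //; apply: ltnW.
Qed.
End Gen.

End G1.
Import G1.

Module G2.
Import Order.TTheory GRing.Theory Num.Theory.
Set Implicit Arguments. Unset Strict Implicit.

Definition ep (T : finType) (e : rel T) (z : T) : rel T :=
  [rel x y | e x y && (x != z) && (y != z)].

Lemma ep_path_neq (T : finType) (e : rel T) z a q :
  path (ep e z) a q -> forall y, y \in q -> y != z.
Proof.
elim: q a => [|b q IH] a //= /andP[/andP[/andP[_ _] bz] pq] y.
by rewrite inE => /orP[/eqP->//|]; move=> yq; apply: IH pq y yq.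
Qed.

Lemma ep_neq (T : finType) (e : rel T) z a x :
  connect (ep e z) a x -> a != z -> x != z.
Proof.
move=> /connectP[q pq ->] az; case: (lastP q) pq => [//|q' b] pq.
rewrite last_rcons; apply: (ep_path_neq pq); by rewrite mem_rcons inE eqxx.
Qed.

Lemma ep_clos (T : finType) (e : rel T) z a x y :
  connect (ep e z) a x -> a != z -> e x y -> y != z -> connect (ep e z) a y.
Proof.
move=> cx az exy yz; apply: (connect_trans cx); apply: connect1.
by rewrite /ep /= exy yz (ep_neq cx az).
Qed.

Lemma ep_tree (T : finType) (e : rel T) z a x :
  acyclic e -> connect (ep e z) a x -> a != z -> e z a -> e x z -> x = a.
Proof.
move=> ac /connectP[q pq ->] az eza.
case: (shortenP pq) => q' pq' uq' _ exz'.
apply/eqP; apply/negPn/negP => xa.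
have H := ac [:: z, a & q'].
have nzq : z \notin q'.
  apply/negP => zq; by move: (ep_path_neq pq' zq); rewrite eqxx.
have ua : uniq [:: z, a & q'].
  by rewrite cons_uniq uq' andbT inE negb_or eq_sym az nzq.
have sz : (3 <= size [:: z, a & q'])%N.
  by case: {H nzq ua} q' pq' uq' exz' xa => [|b q'] //= _ _ _; rewrite eqxx.
move: (H ua sz); apply/negP/negPn.
rewrite /cycle /= rcons_path eza (sub_path _ pq') ?exz' //.
by move=> x1 y1 /andP[/andP[]].
Qed.

Section Tree.
Variables (T : finType) (e : rel T) (r u : T) (s : seq T).
Hypotheses (tr : is_tree e) (ur : u != r) (sp : simple_path e r s u).

Definition pk := size s.
Definition pv (i : nat) := nth r (r :: s) i.

Lemma e_sym : symmetric e. Proof. by case: tr => [[]]. Qed.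
Lemma e_irr : irreflexive e. Proof. by case: tr => [[]]. Qed.
Lemma e_ac : acyclic e. Proof. by case: tr. Qed.

Lemma pv0 : pv 0 = r. Proof. by []. Qed.
Lemma pvk : pv pk = u.
Proof.
case: sp => _ <- _; rewrite /pv /pk.
exact: (nth_last r (r :: s)).
Qed.
Lemma pk_gt0 : (0 < pk)%N.
Proof. case: sp => _ hl _; move: ur; rewrite -hl /pk; case: s => [|a l] /=; [by rewrite eqxx | by []]. Qed.
Lemma pv_edge i : (i < pk)%N -> e (pv i) (pv i.+1).
Proof. case: sp => /(pathP r) H _ _ /H; by []. Qed.
Lemma pv_inj i j : (i <= pk)%N -> (j <= pk)%N -> pv i = pv j -> i = j.
Proof.
case: sp => _ _ uq hi hj /eqP; rewrite /pv nth_uniq //= ?ltnS //; by move/eqP.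
Qed.
Lemma pv_neq i j : (i <= pk)%N -> (j <= pk)%N -> i != j -> pv i != pv j.
Proof. by move=> hi hj ij; apply/eqP => /(pv_inj hi hj) /eqP; rewrite (negbTE ij). Qed.

Lemma deg_gt0 x : (0 < deg e x)%N.
Proof.
case: tr => _ cn _.
have [z xz cz] : exists2 z, x != z & connect e x z.
  case: (eqVneq x r) => [->|xr]; first by exists u; [rewrite eq_sym | exact: cn].
  by exists r => //; exact: cn.
case/connectP: cz => q pq zl.
case: q pq zl => [|y q] /= pq zl; first by move: xz; rewrite zl eqxx.
case/andP: pq => exy _.
rewrite /deg card_gt0; apply/set0Pn; exists y; by rewrite inE.
Qed.

Definition Tsub (i : nat) : {set T} := [set x | connect (ep e (pv i.-1)) (pv i) x].

Lemma Tsub_neq i : (0 < i <= pk)%N -> pv i != pv i.-1.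
Proof. case/andP=> i0 ik; apply: pv_neq => //; first lia. apply/eqP; lia. Qed.

Lemma Ta i l : (0 < i <= pk)%N -> (i <= l <= pk)%N -> pv l \in Tsub i.
Proof.
move=> hi /andP[il lk]; rewrite inE.
elim: l il lk => [|l IH] il lk.
  by case/andP: hi; rewrite leqn0 in il; rewrite (eqP il).
case: (ltngtP i l.+1) il => // [il _|-> _]; last by apply: connect0.
have cl := IH il (ltnW lk).
apply: ep_clos cl (Tsub_neq hi) (pv_edge lk) _.
case/andP: hi => i0 ik; apply: pv_neq; lia.
Qed.

Lemma Tb i l : (0 < i <= pk)%N -> (l < i)%N -> pv l \notin Tsub i.
Proof.
move=> hi; case/andP: (hi) => i0 ik.
have hz := Tsub_neq hi.
suff H : forall m, (m < i)%N -> pv (i.-1 - m) \notin Tsub i.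
  move=> li; have := H (i.-1 - l); rewrite subKn; last by rewrite -ltnS prednK.
  apply; rewrite -(prednK i0) ltnS; exact: leq_subr.
elim=> [|m IH] mi; rewrite inE.
  by rewrite subn0; apply/negP => /(ep_neq)/(_ hz); rewrite eqxx.
apply/negP => cm.
have m1 : (m < i.-1)%N by rewrite -ltnS prednK.
have eq1 : (i.-1 - m.+1).+1 = i.-1 - m by rewrite subnSK.
have hle : (i.-1 - m <= pk)%N by rewrite (leq_trans (leq_subr _ _)) // (leq_trans (leq_pred _)).
have ed : e (pv (i.-1 - m.+1)) (pv (i.-1 - m)).
  rewrite -eq1; apply: pv_edge; by rewrite eq1.
case: m IH mi cm m1 eq1 hle ed => [|m] IH mi cm m1 eq1 hle ed.
  rewrite subn0 in ed.
  have eza : e (pv i.-1) (pv i).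
    have := pv_edge (i := i.-1); rewrite prednK //; apply; lia.
  have := ep_tree e_ac cm hz eza ed => /pv_inj H.
  have : i.-1 - 1 = i by apply: H; lia.
  lia.
have := IH (ltnW mi); rewrite inE => /negP; apply.
apply: ep_clos cm hz ed _; apply: pv_neq; lia.
Qed.

Definition Inv (S : {set T}) : Prop :=
  r \in S /\ forall i, (0 < i <= pk)%N -> pv i \notin S -> forall x, x \in Tsub i -> x \notin S.

Definition cvalid (S : {set T}) (c : {ffun T -> T}) := forall x, x \notin S -> e x (c x).
Definition stepR (S : {set T}) (c : {ffun T -> T}) (S' : {set T}) :=
  (forall x, x \in S -> x \in S') /\ (forall x, x \in S' -> x \notin S -> c x \in S).

Lemma Inv_init : Inv [set r].
Proof.
split; first by rewrite inE.
move=> i hi _ x xT; rewrite inE; apply/negP => /eqP xr.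
by move: xT; rewrite xr -pv0; apply/negP/Tb => //; case/andP: hi.
Qed.

Lemma Tsub_in i x y : (0 < i <= pk)%N -> x \in Tsub i -> e x y -> y \notin Tsub i -> y = pv i.-1.
Proof.
move=> hi; rewrite !inE => cx exy yT; apply/eqP; apply/negPn/negP => yz.
by move: yT; rewrite (ep_clos cx (Tsub_neq hi) exy yz).
Qed.

Lemma Tsub_root i x : (0 < i <= pk)%N -> x \in Tsub i -> e x (pv i.-1) -> x = pv i.
Proof.
move=> hi; rewrite inE => cx ex; apply: (ep_tree e_ac cx (Tsub_neq hi)) ex.
case/andP: hi => i0 ik.
have := pv_edge (i := i.-1); rewrite prednK //; apply; lia.
Qed.

Lemma Inv_step S c S' : Inv S -> cvalid S c -> stepR S c S' -> Inv S'.
Proof.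
move=> [rS IS] cv [sub nw]; split; first exact: sub.
move=> i hi viS' x xT; apply/negP => xS'.
have viS : pv i \notin S by apply/negP => /sub; apply/negP.
have xS : x \notin S by apply: IS hi viS x xT.
have cS := nw x xS' xS.
have cT : c x \notin Tsub i by apply/negP => /(IS i hi viS); rewrite cS.
have := Tsub_in hi xT (cv x xS) cT => cxz.
have := Tsub_root hi xT; rewrite -cxz => /(_ (cv x xS)) xv.
by move: viS'; rewrite -xv xS'.
Qed.

Lemma frontier S : Inv S -> u \notin S ->
  exists j, (0 < j <= pk)%N /\ forall i, (i <= pk)%N -> (pv i \in S) = (i < j)%N.
Proof.
move=> [rS IS] uS.
pose P := [pred x | x \notin S].
have hs : has P (r :: s).
  apply/hasP; exists u => //; rewrite -pvk; apply: mem_nth; by rewrite /= /pk ltnS leqnn.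
pose j := find P (r :: s).
have jk : (j <= pk)%N.
  by rewrite -ltnS; have := hs; rewrite has_find.
have jS : pv j \notin S := nth_find r hs.
have bef : forall i, (i < j)%N -> pv i \in S.
  by move=> i ij; have := before_find r ij; rewrite /P /= => /negbFE.
have j0 : (0 < j)%N by case: (posnP j) jS => // ->; rewrite pv0 rS.
exists j; split; first by rewrite j0.
move=> i ik; case: (ltnP i j) => ij; first exact: bef.
apply/negP => iS; have hj : (0 < j <= pk)%N by rewrite j0.
have iT : pv i \in Tsub j by apply: Ta => //; rewrite ij ik.
by move: (IS j hj jS (pv i) iT); rewrite iS.
Qed.

Lemma newpath S c S' j : Inv S -> cvalid S c -> stepR S c S' ->
  (0 < j <= pk)%N -> (forall i, (i <= pk)%N -> (pv i \in S) = (i < j)%N) ->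
  (forall i, (i <= pk)%N -> i != j -> (pv i \in S') = (pv i \in S)) /\
  (pv j \in S' -> c (pv j) = pv j.-1).
Proof.
move=> [rS IS] cv [sub nw] hj fr.
have jS : pv j \notin S by case/andP: hj => _ jk; rewrite fr // ltnn.
have key : forall x, x \in Tsub j -> x \in S' -> x \notin S -> c x = pv j.-1.
  move=> x xT xS' xS; have cS := nw x xS' xS.
  have cT : c x \notin Tsub j by apply/negP => /(IS j hj jS); rewrite cS.
  exact: Tsub_in hj xT (cv x xS) cT.
split; last first.
  move=> jS'; apply: key jS' jS; apply: Ta => //; case/andP: hj => _ ->; by rewrite leqnn.
move=> i ik ij; case: (ltnP i j) => lij.
  by have := fr i ik; rewrite lij => iS; rewrite iS sub.
have ji : (j < i)%N by rewrite ltn_neqAle eq_sym ij lij.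
have iS : pv i \notin S by rewrite fr // ltnNge lij.
rewrite (negbTE iS); apply/negP => iS'.
have iT : pv i \in Tsub j by apply: Ta => //; rewrite lij ik.
have := key _ iT iS' iS => ce.
have := Tsub_root hj iT; rewrite -ce => /(_ (cv _ iS)) /(pv_inj ik) H.
by move: ij; rewrite H ?eqxx //; case/andP: hj.
Qed.

Lemma u_in_all S : Inv S -> u \in S -> forall i, (0 < i <= pk)%N -> pv i \in S.
Proof.
move=> [rS IS] uS i hi; apply/negPn/negP => iS.
have uT : u \in Tsub i.
  by rewrite -pvk; apply: Ta => //; case/andP: hi => _ ->; rewrite leqnn.
by move: (IS i hi iS u uT); rewrite uS.
Qed.

End Tree.

End G2.
Import G2.

Module G3.
Import Order.TTheory GRing.Theory Num.Theory.
Set Implicit Arguments. Unset Strict Implicit.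
Local Open Scope ring_scope.

Section Prob.
Variables (R : realType) (T : finType) (e : rel T).
Hypothesis dpos : forall x, (0 < deg e x)%N.

Definition W (S : {set T}) v y : R :=
  if v \in S then (y == v)%:R else (e v y)%:R / (deg e v)%:R.

Lemma W_ge0 S v y : 0 <= W S v y.
Proof. rewrite /W; case: ifP => _; by rewrite ?divr_ge0 ?ler0n. Qed.

Lemma sum_nat_ind (A : pred T) : \sum_y (A y)%:R = (#|[set y | A y]|)%:R :> R.
Proof.
rewrite (bigID A) /= [X in _ + X]big1 ?addr0; last by move=> y /negbTE ->.
rewrite (eq_bigr (fun _ => 1)) ?sumr_const; last by move=> y ->.
congr (_ %:R); apply: eq_card => y; by rewrite inE.
Qed.

Lemma W_sum1 S v : \sum_y W S v y = 1.
Proof.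
rewrite /W; case: (v \in S).
  rewrite (bigD1 v) //= eqxx big1 ?addr0 // => y yv; by rewrite (negbTE yv).
rewrite -mulr_suml sum_nat_ind divff //.
rewrite pnatr_eq0 -lt0n; exact: dpos.
Qed.

Lemma W_edge (S : {set T}) v w : v \notin S -> e v w -> W S v w = 1 / (deg e v)%:R.
Proof. by rewrite /W => /negbTE -> ->. Qed.

Lemma wt_prodE S (h : T -> T -> R) :
  \sum_c wt R e S c * \prod_v h v (c v) = \prod_v \sum_y W S v y * h v y.
Proof.
rewrite bigA_distr_bigA /=; apply: eq_bigr => c _.
by rewrite /wt -big_split.
Qed.

Lemma wt_ge0 S c : 0 <= wt R e S c.
Proof. by rewrite /wt; apply: prodr_ge0 => v _; apply: W_ge0. Qed.

Lemma wt_sum1 S : \sum_c wt R e S c = 1.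
Proof.
have H := wt_prodE S (fun _ _ => 1).
have E : forall c : {ffun T -> T}, \prod_v (fun _ _ => (1:R)) v (c v) = 1.
  by move=> c; apply: big1.
rewrite (eq_bigr (fun c => wt R e S c * \prod_v (fun _ _ => (1:R)) v (c v))); last first.
  by move=> c _; rewrite big1_eq mulr1.
rewrite H; apply: big1 => v _; rewrite -[RHS](W_sum1 S v); apply: eq_bigr => y _; exact: mulr1.
Qed.

Lemma wt_marg S v0 (phi : T -> R) :
  \sum_c wt R e S c * phi (c v0) = \sum_y W S v0 y * phi y.
Proof.
have H := wt_prodE S (fun v y => if v == v0 then phi y else 1).
rewrite (eq_bigr (fun c => wt R e S c * \prod_v (fun v y => if v == v0 then phi y else 1) v (c v))); last first.
  by move=> c _; rewrite (bigD1 v0) //= eqxx big1 ?mulr1 // => v /negbTE ->.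
rewrite H (bigD1 v0) //= eqxx.
rewrite [X in _ * X]big1 ?mulr1 // => v vv.
rewrite (negbTE vv); rewrite -[RHS](W_sum1 S v); apply: eq_bigr => y _; exact: mulr1.
Qed.

Lemma wt_valid S c : wt R e S c != 0 -> forall x, x \notin S -> e x (c x).
Proof.
move=> nz x xS; apply/negPn/negP => ex.
move/eqP: nz; apply; apply/eqP; rewrite /wt; apply/prodf_eq0; exists x => //.
by rewrite (negbTE xS) (negbTE ex) mul0r.
Qed.

Lemma selwt_ge0 (S : {set T}) c s : 0 <= selwt R S c s.
Proof.
rewrite /selwt; apply: prodr_ge0 => v _; case: ifP => _; by rewrite ?divr_ge0 ?ler0n.
Qed.

Lemma selwt_sum1 (S : {set T}) c : \sum_s selwt R S c s = 1.
Proof.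
pose G := fun w y => if (w \in S) && (0 < #|req S c w|)%N
  then (y \in req S c w)%:R / #|req S c w|%:R :> R else (y == w)%:R.
rewrite (eq_bigr (fun s : {ffun T -> T} => \prod_w G w (s w))) //.
rewrite -bigA_distr_bigA /=; apply: big1 => w _; rewrite /G.
case hcc: ((w \in S) && (0 < #|req S c w|)%N); first case/andP: hcc => _ hc.
  rewrite -mulr_suml sum_nat_ind.
  have -> : [set y | y \in req S c w] = req S c w by apply/setP => y; rewrite inE.
  by rewrite divff // pnatr_eq0 -lt0n.
by rewrite (bigD1 w) //= eqxx big1 ?addr0 // => y /negbTE ->.
Qed.

Lemma selwt_valid (S : {set T}) c s : selwt R S c s != 0 ->
  forall w, w \in S -> (0 < #|req S c w|)%N -> s w \in req S c w.
Proof.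
move=> nz w wS hc; apply/negPn/negP => sw.
move/eqP: nz; apply; apply/eqP; rewrite /selwt; apply/prodf_eq0; exists w => //.
by rewrite wS hc /= (negbTE sw) mul0r.
Qed.

End Prob.

Lemma pull_stepR (T : finType) (S : {set T}) (c : {ffun T -> T}) : stepR S c (pull_step S c).
Proof.
split; first by move=> x xS; rewrite /pull_step inE xS.
by move=> x; rewrite /pull_step !inE => /orP[->//|/andP[_ ->]].
Qed.

Lemma rpull_stepR (T : finType) (S : {set T}) (c sel : {ffun T -> T}) :
  (forall w, w \in S -> (0 < #|req S c w|)%N -> sel w \in req S c w) ->
  stepR S c (rpull_step S c sel).
Proof.
move=> hv; split; first by move=> x xS; rewrite /rpull_step inE xS.
move=> x; rewrite /rpull_step inE => /orP[->//|/imsetP[w]].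
rewrite inE => /andP[wS hc] ->.
by have := hv w wS hc; rewrite /req inE => /andP[_ /eqP->].
Qed.

Lemma adv_sel_valid (T : finType) (S : {set T}) (c s : {ffun T -> T}) :
  forall w, w \in S -> (0 < #|req S c w|)%N -> adv_sel S c s w \in req S c w.
Proof.
move=> w _ hc; rewrite /adv_sel ffunE; case: ifP => // _.
case: pickP => [v -> //|H]; move: hc; rewrite card_gt0 => /set0Pn[v vr].
by move: (H v); rewrite vr.
Qed.

End G3.
Import G3.

Module G4.
Import Order.TTheory GRing.Theory Num.Theory.
Set Implicit Arguments. Unset Strict Implicit.
Local Open Scope ring_scope.

Lemma sum_shift (R : realType) (n : nat) (f g : 'I_n -> R) (i0 : 'I_n) (d : R) :
  (forall i, i != i0 -> f i <= g i) -> f i0 <= g i0 + d ->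
  \sum_i f i <= \sum_i g i + d.
Proof.
move=> H H0; rewrite (bigD1 i0) // [X in _ <= X + _](bigD1 i0) //=.
rewrite addrAC; apply: lerD => //.
by apply: ler_sum => i /H.
Qed.

Section Pot.
Variables (R : realType) (T : finType) (e : rel T) (r u : T) (s : seq T).
Hypotheses (tr : is_tree e) (ur : u != r) (sp : simple_path e r s u).

Local Notation v := (pv r s).
Local Notation k := (pk s).
Local Notation INV := (G2.Inv e r s).

Definition Psi (S : {set T}) : R :=
  \sum_(i < k) (v i.+1 \notin S)%:R * (deg e (v i.+1))%:R.
Definition mset (i : nat) (S : {set T}) : {set T} :=
  [set x | e (v i) x & (x \notin S) && (x != v i.+1)].
Definition Phi (S : {set T}) : R :=
  \sum_(i < k) (v i.+1 \notin S)%:R * ((deg e (v i.+1))%:R + #|mset i S|%:R).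

Lemma Psi_ge0 S : 0 <= Psi S.
Proof. by apply: sumr_ge0 => i _; rewrite mulr_ge0 ?ler0n. Qed.
Lemma Phi_ge0 S : 0 <= Phi S.
Proof. by apply: sumr_ge0 => i _; rewrite mulr_ge0 ?addr_ge0 ?ler0n. Qed.

Lemma Dsplit : Dpath e r s = (deg e r + \sum_(i < k) deg e (v i.+1))%N.
Proof.
rewrite /Dpath big_cons; congr (_ + _)%N.
by rewrite (big_nth r) big_mkord.
Qed.

Lemma Dsplit2 : (\sum_(i < k) deg e (v i) <= Dpath e r s)%N.
Proof.
rewrite /Dpath (big_nth r) big_mkord /= big_ord_recr /=; exact: leq_addr.
Qed.

Lemma Psi_init : Psi [set r] = (Dpath e r s - deg e r)%:R.
Proof.
rewrite Dsplit addKn natr_sum; apply: eq_bigr => i _.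
have : v i.+1 != v 0 by apply: (pv_neq sp); have := ltn_ord i; lia.
by rewrite inE pv0 => /negbTE ->; rewrite mul1r.
Qed.

Lemma Phi_init : Phi [set r] <= 2 * (Dpath e r s)%:R.
Proof.
apply: (@le_trans _ _ (\sum_(i < k) ((deg e (v i.+1))%:R + (deg e (v i))%:R))).
  apply: ler_sum => i _; case: (_ \notin _); rewrite ?mul1r ?mul0r ?addr_ge0 ?ler0n //.
  rewrite lerD2l ler_nat /deg.
  have H : mset i [set r] \subset [set x | e (v i) x].
    by apply/fintype.subsetP => x; rewrite !inE => /andP[].
  exact: subset_leq_card H.
rewrite big_split /= -!natr_sum mulr2n mulrDl mul1r.
apply: lerD; rewrite ler_nat; last exact: Dsplit2.
by rewrite Dsplit leq_addl.
Qed.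

Lemma Psi_bound S : INV S -> Psi S <= (Dpath e r s)%:R * (u \notin S)%:R.
Proof.
move=> IS; case uS: (u \in S) => /=.
  rewrite mulr0 /Psi big1 // => i _; rewrite (u_in_all ur sp IS uS) ?mul0r //; have := ltn_ord i; lia.
rewrite mulr1; apply: (@le_trans _ _ (\sum_(i < k) (deg e (v i.+1))%:R)).
  apply: ler_sum => i _; case: (_ \notin _); by rewrite ?mul1r ?mul0r ?ler0n.
by rewrite -natr_sum ler_nat Dsplit leq_addl.
Qed.

Definition front (S : {set T}) (j : nat) :=
  (0 < j <= k)%N /\ forall i, (i <= k)%N -> (pv r s i \in S) = (i < j)%N.

Lemma front_w S j : front S j -> v j.-1 \in S.
Proof. by case=> /andP[j0 jk] H; rewrite H; lia. Qed.
Lemma front_v S j : front S j -> v j \notin S.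
Proof. by case=> /andP[j0 jk] H; rewrite H // ltnn. Qed.
Lemma front_edge S j : front S j -> e (v j) (v j.-1).
Proof.
case=> /andP[j0 jk] _; rewrite (e_sym tr); have := pv_edge sp (i := j.-1).
rewrite prednK //; apply; lia.
Qed.

Lemma Psi_lb_pt S c S' j : INV S -> front S j -> cvalid e S c -> stepR S c S' ->
  Psi S <= Psi S' + (deg e (v j))%:R * (c (v j) == v j.-1)%:R.
Proof.
move=> IS [hj fr] cv st.
have [np1 np2] := newpath tr ur sp IS cv st hj fr.
have jk : (j.-1 < k)%N by lia.
rewrite /Psi; apply: (sum_shift (i0 := Ordinal jk)) => [i ii0|] /=.
  rewrite (np1 i.+1); [exact: lexx | have := ltn_ord i; lia |].
  apply/eqP => ij; move: ii0; rewrite -val_eqE /=; lia.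
rewrite prednK; last by case/andP: hj.
rewrite (front_v (conj hj fr)) mul1r.
case vS': (v j \in S') => /=.
  by rewrite (np2 vS') eqxx mul0r add0r mulr1.
by rewrite mul1r lerDl mulr_ge0 ?ler0n.
Qed.

Lemma Psi_ub_pt_pull S c j : INV S -> front S j -> cvalid e S c ->
  Psi (pull_step S c) + (deg e (v j))%:R * (c (v j) == v j.-1)%:R <= Psi S.
Proof.
move=> IS [hj fr] cv.
have st := pull_stepR S c.
have [np1 np2] := newpath tr ur sp IS cv st hj fr.
have jk : (j.-1 < k)%N by lia.
rewrite -lerBrDr /Psi; apply: (sum_shift (i0 := Ordinal jk)) => [i ii0|] /=.
  rewrite (np1 i.+1); [exact: lexx | have := ltn_ord i; lia |].
  apply/eqP => ij; move: ii0; rewrite -val_eqE /=; lia.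
rewrite prednK; last by case/andP: hj.
rewrite (front_v (conj hj fr)) mul1r.
case ce: (c (v j) == v j.-1).
  have -> : v j \in pull_step S c.
    by rewrite /pull_step !inE (negbTE (front_v (conj hj fr))) /= (eqP ce) (front_w (conj hj fr)).
  by rewrite mul0r mulr1 subrr.
by rewrite mulr0 subr0; case: (_ \notin _); rewrite ?mul1r ?mul0r ?ler0n.
Qed.

Definition bA (S : {set T}) j (c : {ffun T -> T}) :=
  [forall x, if x == v j then c x == v j.-1 else (x \in S) || (c x != v j.-1)].
Definition bNB (S : {set T}) j (c : {ffun T -> T}) :=
  [forall x, (x \in S) || (c x != v j.-1)].

Lemma Phi_pt S (c sel : {ffun T -> T}) j : INV S -> front S j -> cvalid e S c ->
  (forall w, w \in S -> (0 < #|req S c w|)%N -> sel w \in req S c w) ->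
  Phi (rpull_step S c sel) + ((deg e (v j))%:R - 1) * (bA S j c)%:R + (~~ bNB S j c)%:R
    <= Phi S.
Proof.
move=> IS [hj fr] cv hsel.
have st := rpull_stepR hsel.
have [np1 np2] := newpath tr ur sp IS cv st hj fr.
have jk : (j.-1 < k)%N by lia.
have wS := front_w (conj hj fr); have vS := front_v (conj hj fr).
set S' := rpull_step S c sel.
have msub : forall i, mset i S' \subset mset i S.
  move=> i; apply/fintype.subsetP => x; rewrite !inE => /andP[-> /andP[xS' ->]].
  by rewrite andbT; apply/negP => xS; move: xS'; rewrite xS.
have d1 : (1 <= deg e (v j))%N by apply: (deg_gt0 tr ur).
rewrite -addrA -lerBrDr /Phi; apply: (sum_shift (i0 := Ordinal jk)) => [i ii0|] /=.
  rewrite (np1 i.+1); first last.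
  - apply/eqP => ij; move: ii0; rewrite -val_eqE /=; lia.
  - have := ltn_ord i; lia.
  case: (_ \notin _); rewrite ?mul0r // !mul1r lerD2l ler_nat; exact: subset_leq_card.
rewrite prednK; last by case/andP: hj.
rewrite vS mul1r.
case vS': (v j \in S') => /=.
  rewrite mul0r; rewrite subr_ge0.
  apply: (@le_trans _ _ (((deg e (v j))%:R - 1) + 1)).
    apply: lerD; last by case: (~~ _).
    case: (bA S j c); rewrite ?mulr1 ?mulr0 // subr_ge0 ler1n //.
  by rewrite subrK lerDl ler0n.
have nA : bA S j c = false.
  apply/negP => /forallP hA.
  have cvj : c (v j) == v j.-1 by have := hA (v j); rewrite eqxx.
  have vreq : v j \in req S c (v j.-1) by rewrite inE vS cvj.
  have hc : (0 < #|req S c (v j.-1)|)%N by rewrite card_gt0; apply/set0Pn; exists (v j).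
  have := hsel _ wS hc; rewrite inE => /andP[yS /eqP cy].
  have := hA (sel (v j.-1)); case: eqP => [ye _|_].
    by move: vS'; rewrite /S' /rpull_step inE -ye; rewrite imset_f ?orbT // inE wS hc.
  by rewrite (negbTE yS) cy eqxx.
rewrite nA mulr0 add0r mul1r.
case bB: (bNB S j c) => /=; first by rewrite mulr0n subr0 lerD2l ler_nat; exact: subset_leq_card.
rewrite lerBrDr -addrA lerD2l -natrD ler_nat addn1.
apply: proper_card; apply/fintype.properP; split; first exact: msub.
move/negbT: bB => /forallPn [x]; rewrite negb_or negbK => /andP[xS /eqP cx].
have xreq : x \in req S c (v j.-1) by rewrite inE xS cx eqxx.
have hc : (0 < #|req S c (v j.-1)|)%N by rewrite card_gt0; apply/set0Pn; exists x.
have := hsel _ wS hc; rewrite inE => /andP[yS /eqP cy].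
exists (sel (v j.-1)).
  rewrite inE yS andTb; apply/andP; split.
    by rewrite (e_sym tr); have := cv _ yS; rewrite cy.
  have jj : j.-1.+1 = j by case/andP: hj => j0 _; rewrite prednK.
  by rewrite jj; apply/eqP => ye; move: vS'; rewrite -ye /S' /rpull_step inE imset_f ?orbT // inE wS hc.
rewrite inE negb_and; apply/orP; right; rewrite negb_and; apply/orP; left; rewrite negbK.
by rewrite /S' /rpull_step inE imset_f ?orbT // inE wS hc.
Qed.

End Pot.

End G4.
Import G4.

Module G5.
Import Order.TTheory GRing.Theory Num.Theory.
Set Implicit Arguments. Unset Strict Implicit.
Local Open Scope ring_scope.

Lemma exp_lb (R : realType) (I : finType) (mu f g : I -> R) a :
  (forall i, 0 <= mu i) -> \sum_i mu i = 1 ->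
  (forall i, mu i != 0 -> a <= f i + g i) ->
  a <= \sum_i mu i * f i + \sum_i mu i * g i.
Proof.
move=> m0 m1 H; rewrite -big_split /=.
have -> : a = \sum_i mu i * a by rewrite -mulr_suml m1 mul1r.
apply: ler_sum => i _; rewrite -mulrDr.
have [->|nz] := eqVneq (mu i) 0; first by rewrite !mul0r.
by rewrite ler_wpM2l // H.
Qed.

Lemma exp_ub (R : realType) (I : finType) (mu f g : I -> R) a :
  (forall i, 0 <= mu i) -> \sum_i mu i = 1 ->
  (forall i, mu i != 0 -> f i + g i <= a) ->
  \sum_i mu i * f i + \sum_i mu i * g i <= a.
Proof.
move=> m0 m1 H; rewrite -big_split /=.
have -> : a = \sum_i mu i * a by rewrite -mulr_suml m1 mul1r.
apply: ler_sum => i _; rewrite -mulrDr.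
have [->|nz] := eqVneq (mu i) 0; first by rewrite !mul0r.
by rewrite ler_wpM2l // H.
Qed.

Lemma prod_forall (R : realType) (T : finType) (P : pred T) :
  \prod_x (P x)%:R = ([forall x, P x])%:R :> R.
Proof.
case: (boolP [forall x, P x]) => [/forallP H|/forallPn[x Px]]; first by rewrite big1 // => x _; rewrite H.
by rewrite (bigD1 x) //= (negbTE Px) mul0r.
Qed.

Lemma mu_nz_l (R : realType) (a b : R) : a * b != 0 -> a != 0.
Proof. by apply: contraNN => /eqP ->; rewrite mul0r. Qed.
Lemma mu_nz_r (R : realType) (a b : R) : a * b != 0 -> b != 0.
Proof. by apply: contraNN => /eqP ->; rewrite mulr0. Qed.

Section Main.
Variables (R : realType) (T : finType) (e : rel T) (r u : T) (s : seq T).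
Hypotheses (tr : is_tree e) (ur : u != r) (sp : simple_path e r s u).

Local Notation v := (pv r s).
Local Notation k := (pk s).
Local Notation INV := (G2.Inv e r s).
Let dpos := deg_gt0 tr ur.

Lemma front_ex S : INV S -> u \notin S -> exists j, front r s S j.
Proof. by move=> IS uS; have [j [hj fr]] := frontier ur sp IS uS; exists j. Qed.

Lemma marg_edge S j : front r s S j ->
  \sum_c wt R e S c * ((deg e (v j))%:R * (c (v j) == v j.-1)%:R) = 1.
Proof.
move=> fj.
have := wt_marg dpos S (v j) (fun y => (deg e (v j))%:R * (y == v j.-1)%:R).
move=> ->; rewrite (bigD1 (v j.-1)) //= eqxx mulr1 big1 ?addr0; last first.
  by move=> y /negbTE ->; rewrite mulr0n !mulr0.
rewrite (W_edge R (front_v fj) (front_edge tr ur sp fj)) mul1r mulVf //.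
by rewrite pnatr_eq0 -lt0n dpos.
Qed.

Lemma marg_adv S j : front r s S j ->
  \sum_c wt R e S c * (((deg e (v j))%:R - 1) * (bA r s S j c)%:R + (~~ bNB r s S j c)%:R) = 1.
Proof.
move=> fj.
have vS := front_v fj.
set w := v j.-1; set vj := v j; set d := (deg e vj)%:R : R.
have dn : d != 0 by rewrite pnatr_eq0 -lt0n dpos.
have Wvw : W R e S vj w = 1 / d.
  have H := W_edge R vS (front_edge tr ur sp fj); rewrite H /d /vj /w; by [].
pose hA := fun x y => (if x == vj then y == w else (x \in S) || (y != w)).
pose hB := fun x y => (x \in S) || (y != w).
have EA : \sum_c wt R e S c * (bA r s S j c)%:R = \prod_x \sum_y W R e S x y * (hA x y)%:R.
  rewrite -wt_prodE; apply: eq_bigr => c _; congr (_ * _).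
  by rewrite (prod_forall R (fun x => hA x (c x))).
have EB : \sum_c wt R e S c * (bNB r s S j c)%:R = \prod_x \sum_y W R e S x y * (hB x y)%:R.
  rewrite -wt_prodE; apply: eq_bigr => c _; congr (_ * _).
  by rewrite (prod_forall R (fun x => hB x (c x))).
pose Q := \prod_(x | x != vj) \sum_y W R e S x y * (hB x y)%:R.
have EA' : \prod_x \sum_y W R e S x y * (hA x y)%:R = 1 / d * Q.
  rewrite (bigD1 vj) //=; congr (_ * _).
    rewrite /hA eqxx (bigD1 w) //= eqxx mulr1 big1 ?addr0; last first.
      by move=> y /negbTE ->; rewrite mulr0n !mulr0.
    exact: Wvw.
  apply: eq_bigr => x /negbTE xv; apply: eq_bigr => y _; by rewrite /hA xv.
have EB' : \prod_x \sum_y W R e S x y * (hB x y)%:R = (1 - 1 / d) * Q.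
  rewrite (bigD1 vj) //=; congr (_ * _).
  rewrite /hB (negbTE vS) /=.
  transitivity (\sum_y W R e S vj y - W R e S vj w); last by rewrite W_sum1 // Wvw.
  rewrite (bigD1 w) //= [X in _ = X - _](bigD1 w) //= eqxx /= mulr0n mulr0 add0r.
  rewrite addrAC subrr add0r; apply: eq_bigr => y /negbTE ->; by rewrite mulr1.
have -> : \sum_c wt R e S c * ((d - 1) * (bA r s S j c)%:R + (~~ bNB r s S j c)%:R) =
  (d - 1) * \sum_c wt R e S c * (bA r s S j c)%:R +
  (1 - \sum_c wt R e S c * (bNB r s S j c)%:R).
  rewrite -[X in _ = _ + (X - _)](wt_sum1 R dpos S) mulr_sumr -sumrB -big_split /=.
  apply: eq_bigr => c _.
  have -> : (~~ bNB r s S j c)%:R = 1 - (bNB r s S j c)%:R :> R.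
    by case: (bNB r s S j c); rewrite /= ?subrr ?subr0.
  ring.
rewrite EA EB EA' EB'; field; exact: dn.
Qed.

Definition pmu (S : {set T}) (c : {ffun T -> T}) := wt R e S c.
Definition pnx (S : {set T}) (c : {ffun T -> T}) := pull_step S c.
Definition pbad (S : {set T}) := u \notin S.

Lemma pull_eq t S : pull_surv R e u t S = gsurv pmu pnx pbad t S.
Proof.
elim: t S => [|t IH] S //=; apply: eq_bigr => c _; by rewrite IH.
Qed.

Lemma pull_inv S c : INV S -> pmu S c != 0 -> INV (pnx S c).
Proof. move=> IS nz; apply: (Inv_step tr ur sp IS _ (pull_stepR S c)); exact: wt_valid nz. Qed.

Lemma pull_bad S c : INV S -> pmu S c != 0 -> pbad (pnx S c) -> pbad S.
Proof. move=> _ _; apply: contraNN => uS; exact: (pull_stepR S c).1. Qed.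

Lemma pull_lb_drift S : INV S -> pbad S ->
  Psi R e r s S <= 1 + \sum_c pmu S c * Psi R e r s (pnx S c).
Proof.
move=> IS uS; have [j fj] := front_ex IS uS.
rewrite addrC -(marg_edge fj); apply: exp_lb; [exact: wt_ge0 | exact: wt_sum1 | ].
move=> c nz; apply: (Psi_lb_pt R tr ur sp) => //; [exact: (wt_valid nz) | exact: pull_stepR].
Qed.

Lemma pull_ub_drift S : INV S -> pbad S ->
  1 + \sum_c pmu S c * Psi R e r s (pnx S c) <= Psi R e r s S.
Proof.
move=> IS uS; have [j fj] := front_ex IS uS.
rewrite addrC -(marg_edge fj); apply: exp_ub; [exact: wt_ge0 | exact: wt_sum1 | ].
move=> c nz; apply: (Psi_ub_pt_pull R tr ur sp) => //; exact: (wt_valid nz).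
Qed.

Lemma E_pull_bounds :
  ((1/2 * (Dpath e r s - deg e r)%:R)%:E <= E_pull R e r u)%E /\
  (E_pull R e r u <= (1 * (Dpath e r s - deg e r)%:R)%:E)%E.
Proof.
have I0 := Inv_init tr ur sp.
have F : forall N, \sum_(t < N) pull_surv R e u t [set r] = gF pmu pnx pbad N [set r].
  by move=> N; apply: eq_bigr => t _; rewrite pull_eq.
have f0 : forall t, 0 <= pull_surv R e u t [set r].
  by move=> t; rewrite pull_eq; apply: gsurv_ge0 => ? ?; exact: wt_ge0.
split.
  apply: le_trans (ET_ge (Dpath e r s).+1 f0); rewrite F lee_fin -(Psi_init R ur sp).
  have := gF_lb (fun S c => wt_ge0 R e S c) (fun S _ => wt_sum1 R dpos S) pull_inv pull_bad
    (fun S IS => Psi_bound R ur sp IS) pull_lb_drift I0.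
  move=> H; apply: le_trans (ler_wpM2l _ H) _; first by rewrite divr_ge0.
  by rewrite mulrA mul1r mulVf ?mul1r // pnatr_eq0.
apply: ET_le => // N; rewrite F mul1r -(Psi_init R ur sp).
apply: (gF_ub (fun S c => wt_ge0 R e S c) pull_inv pull_bad) => //.
  by move=> S _; exact: Psi_ge0.
exact: pull_ub_drift.
Qed.

End Main.

End G5.
Import G5.

Module G6.
Import Order.TTheory GRing.Theory Num.Theory.
Set Implicit Arguments. Unset Strict Implicit.
Local Open Scope ring_scope.

Section Main2.
Variables (R : realType) (T : finType) (e : rel T) (r u : T) (s : seq T).
Hypotheses (tr : is_tree e) (ur : u != r) (sp : simple_path e r s u).

Local Notation v := (pv r s).
Local Notation INV := (G2.Inv e r s).
Let dpos := deg_gt0 tr ur.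

Definition rmu (S : {set T}) (p : {ffun T -> T} * {ffun T -> T}) :=
  wt R e S p.1 * selwt R S p.1 p.2.
Definition rnx (S : {set T}) (p : {ffun T -> T} * {ffun T -> T}) := rpull_step S p.1 p.2.
Definition rbad (S : {set T}) := u \notin S.

Lemma rr_eq t S : rrpull_surv R e u t S = gsurv rmu rnx rbad t S.
Proof.
elim: t S => [|t IH] S //=; rewrite pair_bigA /=; apply: eq_bigr => p _; by rewrite IH.
Qed.

Lemma rmu_ge0 S p : 0 <= rmu S p.
Proof. by rewrite /rmu mulr_ge0 ?wt_ge0 ?selwt_ge0. Qed.

Lemma rmu_sum1 S : \sum_p rmu S p = 1.
Proof.
rewrite /rmu -(pair_bigA _ (fun c s0 => wt R e S c * selwt R S c s0)) /=.
rewrite -[RHS](wt_sum1 R dpos S); apply: eq_bigr => c _.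
by rewrite -mulr_sumr selwt_sum1 mulr1.
Qed.

Lemma rmu_valid S p : rmu S p != 0 ->
  cvalid e S p.1 /\ stepR S p.1 (rnx S p).
Proof.
move=> nz; split; first exact: wt_valid (mu_nz_l nz).
apply: rpull_stepR => w wS hc; exact: selwt_valid (mu_nz_r nz) w wS hc.
Qed.

Lemma rr_inv S p : INV S -> rmu S p != 0 -> INV (rnx S p).
Proof. move=> IS /rmu_valid[cv st]; exact: (Inv_step tr ur sp IS cv st). Qed.

Lemma rr_bad S p : INV S -> rmu S p != 0 -> rbad (rnx S p) -> rbad S.
Proof. move=> _ /rmu_valid[_ st]; apply: contraNN => uS; exact: st.1. Qed.

Lemma rr_lb_drift S : INV S -> rbad S ->
  Psi R e r s S <= 1 + \sum_p rmu S p * Psi R e r s (rnx S p).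
Proof.
move=> IS uS; have [j fj] := front_ex ur sp IS uS.
have M : \sum_p rmu S p * ((deg e (v j))%:R * (p.1 (v j) == v j.-1)%:R) = 1.
  rewrite -[RHS](marg_edge R tr ur sp fj).
  have E1 : forall c : {ffun T -> T},
      wt R e S c * ((deg e (v j))%:R * (c (v j) == v j.-1)%:R) =
      \sum_s0 wt R e S c * selwt R S c s0 * ((deg e (v j))%:R * (c (v j) == v j.-1)%:R).
    by move=> c; rewrite -mulr_suml -mulr_sumr selwt_sum1 mulr1.
  rewrite (eq_bigr _ (fun c _ => E1 c)) pair_bigA /=.
  by apply: eq_bigr => p _; rewrite /rmu mulrA.
rewrite addrC -M; apply: exp_lb; [exact: rmu_ge0 | exact: rmu_sum1 | ].
move=> p /rmu_valid[cv st]; exact: (Psi_lb_pt R tr ur sp IS fj cv st).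
Qed.

Lemma E_rr_lb :
  ((1/2 * (Dpath e r s - deg e r)%:R)%:E <= E_rrpull R e r u)%E.
Proof.
have I0 := Inv_init tr ur sp.
have F : forall N, \sum_(t < N) rrpull_surv R e u t [set r] = gF rmu rnx rbad N [set r].
  by move=> N; apply: eq_bigr => t _; rewrite rr_eq.
have f0 : forall t, 0 <= rrpull_surv R e u t [set r].
  by move=> t; rewrite rr_eq; apply: gsurv_ge0 => ? ?; exact: rmu_ge0.
apply: le_trans (ET_ge (Dpath e r s).+1 f0); rewrite F lee_fin -(Psi_init R ur sp).
have := gF_lb rmu_ge0 (fun S _ => rmu_sum1 S) rr_inv rr_bad
  (fun S IS => Psi_bound R ur sp IS) rr_lb_drift I0.
move=> H; apply: le_trans (ler_wpM2l _ H) _; first by rewrite divr_ge0.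
by rewrite mulrA mul1r mulVf ?mul1r // pnatr_eq0.
Qed.

Variable A : adversary T.
Definition amu (x : seq {ffun T -> T} * {set T}) (c : {ffun T -> T}) := wt R e x.2 c.
Definition anx (x : seq {ffun T -> T} * {set T}) (c : {ffun T -> T}) :=
  (rcons x.1 c, rpull_step x.2 c (adv_sel x.2 c (A (rcons x.1 c)))).
Definition abad (x : seq {ffun T -> T} * {set T}) := u \notin x.2.
Definition aInv (x : seq {ffun T -> T} * {set T}) := INV x.2.

Lemma ar_eq t h S : arpull_surv R e u A t h S = gsurv amu anx abad t (h, S).
Proof.
elim: t h S => [|t IH] h S //=; apply: eq_bigr => c _; by rewrite IH.
Qed.

Lemma amu_ge0 x c : 0 <= amu x c. Proof. exact: wt_ge0. Qed.

Lemma amu_valid x c : amu x c != 0 -> cvalid e x.2 c /\ stepR x.2 c (anx x c).2.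
Proof.
move=> nz; split; first exact: wt_valid nz.
apply: rpull_stepR; exact: adv_sel_valid.
Qed.

Lemma ar_inv x c : aInv x -> amu x c != 0 -> aInv (anx x c).
Proof. move=> IS /amu_valid[cv st]; exact: (Inv_step tr ur sp IS cv st). Qed.

Lemma ar_bad x c : aInv x -> amu x c != 0 -> abad (anx x c) -> abad x.
Proof. move=> _ /amu_valid[_ st]; apply: contraNN => uS; exact: st.1. Qed.

Lemma ar_lb_drift x : aInv x -> abad x ->
  Psi R e r s x.2 <= 1 + \sum_c amu x c * Psi R e r s (anx x c).2.
Proof.
move=> IS uS; have [j fj] := front_ex ur sp IS uS.
rewrite addrC -(marg_edge R tr ur sp fj); apply: exp_lb; [exact: wt_ge0 | exact: wt_sum1 | ].
move=> c /amu_valid[cv st]; exact: (Psi_lb_pt R tr ur sp IS fj cv st).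
Qed.

Lemma ar_ub_drift x : aInv x -> abad x ->
  1 + \sum_c amu x c * Phi R e r s (anx x c).2 <= Phi R e r s x.2.
Proof.
move=> IS uS; have [j fj] := front_ex ur sp IS uS.
rewrite addrC -(marg_adv R tr ur sp fj); apply: exp_ub; [exact: wt_ge0 | exact: wt_sum1 | ].
move=> c nz; rewrite addrA.
apply: (Phi_pt R tr ur sp IS fj (wt_valid nz)); exact: adv_sel_valid.
Qed.

Lemma E_ar_bounds :
  ((1/2 * (Dpath e r s - deg e r)%:R)%:E <= E_arpull R e r u A)%E /\
  (E_arpull R e r u A <= (2 * (Dpath e r s)%:R)%:E)%E.
Proof.
have I0 : aInv ([::], [set r]) := Inv_init tr ur sp.
have F : forall N, \sum_(t < N) arpull_surv R e u A t [::] [set r] = gF amu anx abad N ([::], [set r]).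
  by move=> N; apply: eq_bigr => t _; rewrite ar_eq.
have f0 : forall t, 0 <= arpull_surv R e u A t [::] [set r].
  by move=> t; rewrite ar_eq; apply: gsurv_ge0 => ? ?; exact: amu_ge0.
split.
  apply: le_trans (ET_ge (Dpath e r s).+1 f0); rewrite F lee_fin -(Psi_init R ur sp).
  have := gF_lb amu_ge0 (fun x _ => wt_sum1 R dpos x.2) ar_inv ar_bad
    (Psi := fun x => Psi R e r s x.2) (C := Dpath e r s)
    (fun x IS => Psi_bound R ur sp IS) ar_lb_drift I0.
  move=> H; apply: le_trans (ler_wpM2l _ H) _; first by rewrite divr_ge0.
  by rewrite mulrA mul1r mulVf ?mul1r // pnatr_eq0.
apply: ET_le => // N; rewrite F; apply: le_trans (Phi_init R e r s).
apply: (gF_ub amu_ge0 ar_inv ar_bad (Phi := fun x => Phi R e r s x.2)) => //.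
  by move=> x _; exact: Phi_ge0.
exact: ar_ub_drift.
Qed.

End Main2.

End G6.
Import G6.

Local Open Scope ring_scope.

Theorem lemma1 (R : realType) :
  (* (1) PULL: E[tau] = Theta(D_p - d_r) *)
  (exists c1 c2 : R, 0 < c1 /\ 0 < c2 /\
     forall (T : finType) (e : rel T) (r u : T) (s : seq T),
       is_tree e -> u != r -> simple_path e r s u ->
       ((c1 * (Dpath e r s - deg e r)%:R)%:E <= E_pull R e r u)%E /\
       (E_pull R e r u <= (c2 * (Dpath e r s - deg e r)%:R)%:E)%E)
  /\
  (* (2) every RPULL (random, and adversarial for every adversary): Omega(D_p - d_r) *)
  (exists c : R, 0 < c /\
     forall (T : finType) (e : rel T) (r u : T) (s : seq T),
       is_tree e -> u != r -> simple_path e r s u ->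
       ((c * (Dpath e r s - deg e r)%:R)%:E <= E_rrpull R e r u)%E /\
       (forall A : adversary T,
          ((c * (Dpath e r s - deg e r)%:R)%:E <= E_arpull R e r u A)%E))
  /\
  (* (3) adversarial RPULL, every adversary: O(D_p) *)
  (exists c : R, 0 < c /\
     forall (T : finType) (e : rel T) (r u : T) (s : seq T),
       is_tree e -> u != r -> simple_path e r s u ->
       forall A : adversary T,
         (E_arpull R e r u A <= (c * (Dpath e r s)%:R)%:E)%E).
Proof.
have h2 : (0 : R) < 1/2 by rewrite divr_gt0 ?ltr01 ?ltr0n.
split.
  exists (1/2), 1; split => //; split; first exact: ltr01.
  move=> T e r u s tr ur sp; exact: (E_pull_bounds R tr ur sp).
split.
  exists (1/2); split => // T e r u s tr ur sp; split; first exact: (E_rr_lb R tr ur sp).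
  by move=> A; exact: (E_ar_bounds R tr ur sp A).1.
exists 2; split; first by rewrite ltr0n.
move=> T e r u s tr ur sp A; exact: (E_ar_bounds R tr ur sp A).2.
Qed.
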